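(* Let $W\in[0,1]^{k\times k}$ be a symmetric positive semidefinite matrix with unit diagonal, let $\mu>0$, and consider the collaborative learning problem with strategy space $\mathbb{R}_+^k$, utilities $u_i({\boldsymbol\theta})=W_i^\top{\boldsymbol\theta}$ ($W_i$ the $i$-th column of $W$) and thresholds $\mu_i=\mu$ for all $i\in[k]$. Let ${\boldsymbol\theta}^{\mathrm{eq}}$ be an optimal stable equilibrium, let $I=\{i:\theta^{\mathrm{eq}}_i=0\}$, and let $\bar W$ and $\bar{\boldsymbol\theta}^{\mathrm{eq}}$ be the restrictions of $W$ (rows and columns) and ${\boldsymbol\theta}^{\mathrm{eq}}$ to the index set $[k]\setminus I$. Then $\bar{\boldsymbol\theta}^{\mathrm{eq}}$ is a socially optimal solution for the agents in $[k]\setminus I$ with utilities $u_i(\bar{\boldsymbol\theta})=\bar W_i^\top\bar{\boldsymbol\theta}$ and threshold $\mu$, i.e. it is an optimal solution of $\min\{\mathbf{1}^\top{\bf x}:\bar W{\bf x}\ge\mu\mathbf{1},\ {\bf x}\ge\mathbf{0}\}$. Furthermore, for any socially optimal solution $\bar{\boldsymbol\theta}$ for the agents $[k]\setminus I$, its extension $\tilde{\boldsymbol\theta}\in\mathbb{R}_+^k$ defined by $\tilde\theta_i=0$ for $i\in I$ and $\tilde\theta_i=\bar\theta_i$ otherwise is an optimal stable equilibrium for the agents $[k]$.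
   Context: ${\boldsymbol\theta}$ is feasible if $u_i({\boldsymbol\theta})\ge\mu_i$ for all $i$. A feasible ${\boldsymbol\theta}\in\mathbb{R}_+^k$ is a stable equilibrium if for no $i$ is there $0\le\theta_i'<\theta_i$ with $u_i(\theta_i',{\boldsymbol\theta}_{-i})\ge\mu_i$ (${\boldsymbol\theta}$ with $i$-th entry replaced by $\theta_i'$). An optimal stable equilibrium is a stable equilibrium minimizing $\mathbf{1}^\top{\boldsymbol\theta}$. A socially optimal solution minimizes $\mathbf{1}^\top{\boldsymbol\theta}$ over all feasible ${\boldsymbol\theta}\ge\mathbf{0}$. *)

(* Defs.v *)
From HB Require Import structures.
From mathcomp Require Import all_boot all_order all_algebra.
Set Implicit Arguments. Unset Strict Implicit. Unset Printing Implicit Defensive.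
Import Order.TTheory GRing.Theory Num.Theory.
Local Open Scope ring_scope.

(* Collaborative learning problem with agents indexed by a finite type T,
   strategy space R_+^T, utilities u_i(theta) = sum_j W j i * theta j
   (= W_i^T theta, W symmetric) and common threshold mu. *)
Section CL.
Variables (R : realFieldType) (T : finType).

Definition util (W : T -> T -> R) (i : T) (theta : T -> R) : R :=
  \sum_(j : T) W j i * theta j.

Definition repl (theta : T -> R) (i : T) (t : R) : T -> R :=
  fun j => if j == i then t else theta j.

Definition total (theta : T -> R) : R := \sum_(j : T) theta j.

Definition feasible (W : T -> T -> R) (mu : R) (theta : T -> R) : Prop :=
  (forall j, 0 <= theta j) /\ (forall i, mu <= util W i theta).

Definition stable_eq (W : T -> T -> R) (mu : R) (theta : T -> R) : Prop :=
  feasible W mu theta /\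
  forall i (t : R), 0 <= t -> t < theta i -> ~ (mu <= util W i (repl theta i t)).

Definition optimal_stable_eq (W : T -> T -> R) (mu : R) (theta : T -> R) : Prop :=
  stable_eq W mu theta /\
  forall theta', stable_eq W mu theta' -> total theta <= total theta'.

Definition socially_optimal (W : T -> T -> R) (mu : R) (theta : T -> R) : Prop :=
  feasible W mu theta /\
  forall theta', feasible W mu theta' -> total theta <= total theta'.
End CL.

Definition restr_mx (R : Type) (k : nat) (P : pred 'I_k) (W : 'M[R]_k)
  : {i : 'I_k | P i} -> {i : 'I_k | P i} -> R :=
  fun i j => W (val i) (val j).

Definition restr_vec (R : Type) (k : nat) (P : pred 'I_k) (theta : 'I_k -> R)
  : {i : 'I_k | P i} -> R := fun i => theta (val i).

Definition extend (R : nzRingType) (k : nat) (P : pred 'I_k)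
  (x : {i : 'I_k | P i} -> R) : 'I_k -> R :=
  fun i => match @insub _ P {i : 'I_k | P i} i with
           | Some s => x s
           | None => 0
           end.

Arguments restr_mx {R k} P W _ _.
Arguments restr_vec {R k} P theta _.
Arguments extend {R k P} x _.

(* Main.v *)
Require Import Defs.
From HB Require Import structures.
From mathcomp Require Import all_boot all_order all_algebra.
From mathcomp Require Import ring lra.
Import Order.TTheory GRing.Theory Num.Theory.
Local Open Scope ring_scope.

Lemma sig_sum (R : realFieldType) k (P : pred 'I_k) (F : 'I_k -> R) :
  \sum_(s : {i : 'I_k | P i}) F (val s) = \sum_(i | P i) F i.
Proof. by rewrite (big_sub P F). Qed.

Lemma sum_off (R : realFieldType) k (P : pred 'I_k) (F : 'I_k -> R) :
  (forall i, ~~ P i -> F i = 0) -> \sum_i F i = \sum_(i | P i) F i.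
Proof.
move=> H; rewrite [RHS]big_mkcond; apply: eq_bigr => i _.
by case: ifP => // /negbT /H.
Qed.

Lemma extend_in (R : realFieldType) k (P : pred 'I_k) (x : {i : 'I_k | P i} -> R)
  (s : {i : 'I_k | P i}) : extend x (val s) = x s.
Proof.
rewrite /extend insubT; first exact: (valP s).
by move=> Ps; congr x; apply: val_inj.
Qed.

Lemma extend_out (R : realFieldType) k (P : pred 'I_k) (x : {i : 'I_k | P i} -> R)
  i : ~~ P i -> extend x i = 0.
Proof. by move=> Hi; rewrite /extend insubN. Qed.

Lemma sum_extend (R : realFieldType) k (P : pred 'I_k) (x : {i : 'I_k | P i} -> R)
  (F : 'I_k -> R) :
  \sum_i F i * extend x i = \sum_(s : {i : 'I_k | P i}) F (val s) * x s.
Proof.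
rewrite (@sum_off _ _ P); last by move=> i /(@extend_out _ _ _ x) ->; rewrite mulr0.
rewrite -sig_sum; apply: eq_bigr => s _; by rewrite extend_in.
Qed.

Lemma total_extend (R : realFieldType) k (P : pred 'I_k) (x : {i : 'I_k | P i} -> R) :
  Defs.total (extend x) = Defs.total x.
Proof.
rewrite /Defs.total; under eq_bigr do rewrite -[extend x _]mul1r.
by rewrite sum_extend; apply: eq_bigr => s _; rewrite mul1r.
Qed.

Lemma util_repl (R : realFieldType) k (W : 'I_k -> 'I_k -> R) i th t :
  util W i (repl th i t) = util W i th + (t - th i) * W i i.
Proof.
rewrite /util (bigD1 i) //= [X in _ = X + _](bigD1 i) //= /repl eqxx.
rewrite (eq_bigr (fun j => W j i * th j)); last by move=> j /negbTE ->.
set S := \sum_(j | _) _.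
clearbody S; ring.
Qed.

Lemma util_dual (R : realFieldType) k (W : 'I_k -> 'I_k -> R)
  (Ws : forall a b, W a b = W b a) x y :
  \sum_i y i * util W i x = \sum_i x i * util W i y.
Proof.
rewrite /util.
under eq_bigr => i _ do rewrite big_distrr.
rewrite exchange_big; apply: eq_bigr => j _ /=.
rewrite [RHS]big_distrr; apply: eq_bigr => i _ /=.
by rewrite Ws mulrCA mulrA mulrC.
Qed.

Lemma sum_delta (R : realFieldType) k (i : 'I_k) (F : 'I_k -> R) :
  \sum_b F b * (b == i)%:R = F i.
Proof.
rewrite (bigD1 i) //= eqxx mulr1 big1 ?addr0 // => a /negbTE ->.
by rewrite mulr0.
Qed.

Lemma psd_orth (R : realFieldType) k (W : 'M[R]_k)
  (Wsym : W^T = W)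
  (Wpsd : forall x : 'cV[R]_k, 0 <= (x^T *m W *m x) 0 0)
  (Wdiag : forall i, W i i = 1) (d : 'I_k -> R) i :
  (forall b, d b * \sum_a d a * W a b = 0) -> \sum_a d a * W a i = 0.
Proof.
move=> Hd.
have Ws : forall a b, W a b = W b a.
  by move=> a b; rewrite -{1}Wsym mxE.
set c := \sum_a d a * W a i.
pose v : 'cV[R]_k := \col_j (d j - c * (j == i)%:R).
have := Wpsd v.
have E : (v^T *m W *m v) 0 0 = \sum_b (\sum_a v a 0 * W a b) * v b 0.
  rewrite mxE; apply: eq_bigr => b _; rewrite mxE; congr (_ * _).
  by apply: eq_bigr => a _; rewrite !mxE.
have g : forall b, \sum_a v a 0 * W a b = \sum_a d a * W a b - c * W i b.
  move=> b; under eq_bigr do rewrite mxE mulrBl.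
  rewrite sumrB; congr (_ - _).
  under eq_bigr do rewrite mulrAC.
  by rewrite sum_delta.
rewrite E; under eq_bigr do rewrite g mxE.
set Dd := fun b => \sum_a d a * W a b.
have eb : forall b, (Dd b - c * W i b) * (d b - c * (b == i)%:R) =
   d b * Dd b - c * (d b * W b i) - c * ((Dd b - c * W i b) * (b == i)%:R).
  by move=> b; rewrite Ws; ring.
under eq_bigr do rewrite eb.
rewrite !sumrB -!mulr_sumr sum_delta big1 // sub0r.
rewrite -/c Wdiag mulr1 (_ : Dd i = c) // subrr mulr0 subr0.
move=> H.
have H2 : c ^+ 2 <= 0 by rewrite expr2 -oppr_ge0.
by apply/eqP; rewrite -sqrf_eq0 eq_le H2 sqr_ge0.
Qed.

Theorem theorem6 (R : realFieldType) (k : nat) (W : 'M[R]_k) (mu : R)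
  (W01 : forall i j, 0 <= W i j <= 1)
  (Wsym : W^T = W)
  (Wpsd : forall x : 'cV[R]_k, 0 <= (x^T *m W *m x) 0 0)
  (Wdiag : forall i, W i i = 1)
  (mu_pos : 0 < mu)
  (theq : 'I_k -> R)
  (Heq : optimal_stable_eq (fun i j => W i j) mu theq) :
  socially_optimal (restr_mx (fun i => theq i != 0) W) mu
                   (restr_vec (fun i => theq i != 0) theq) /\
  forall thbar : {i : 'I_k | theq i != 0} -> R,
    socially_optimal (restr_mx (fun i => theq i != 0) W) mu thbar ->
    optimal_stable_eq (fun i j => W i j) mu (extend thbar).
Proof.
move: Heq => [[[th0 thfeas] thstab] thopt].
have Ws : forall a b, W a b = W b a.
  by move=> a b; rewrite -{1}Wsym mxE.
have tight : forall i, theq i != 0 -> util (fun i j => W i j) i theq = mu.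
  move=> i nz; apply/eqP; rewrite eq_le (thfeas i) andbT leNgt; apply/negP => Hlt.
  have tpos : 0 < theq i by rewrite lt_def nz th0.
  case: (leP (theq i) (util (fun i j => W i j) i theq - mu)) => Hc.
  - apply: (thstab i 0) => //.
    by rewrite util_repl /= Wdiag; lra.
  - apply: (thstab i (theq i - (util (fun i j => W i j) i theq - mu))); try lra.
    by rewrite util_repl /= Wdiag; lra.
have gap : forall y : 'I_k -> R, (forall i, theq i == 0 -> y i = 0) ->
    \sum_i theq i * (util (fun i j => W i j) i y - mu) =
    mu * (Defs.total y - Defs.total theq).
  move=> y yz.
  under eq_bigr do rewrite mulrBr.
  rewrite sumrB util_dual //.
  have -> : \sum_i y i * util (fun i j => W i j) i theq = \sum_i y i * mu.
    apply: eq_bigr => i _; case: (eqVneq (theq i) 0) => [/eqP/yz -> | /tight ->].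
      by rewrite !mul0r.
    by [].
  by rewrite -!mulr_suml /Defs.total mulrBr ![mu * _]mulrC.
have util_ext : forall (x : {i : 'I_k | theq i != 0} -> R) s,
    util (fun i j => W i j) (val s) (extend x) = util (restr_mx (fun i => theq i != 0) W) s x.
  by move=> x s; rewrite /util sum_extend.
have ext_z : forall (x : {i : 'I_k | theq i != 0} -> R) i, theq i == 0 -> extend x i = 0.
  by move=> x i H; apply: extend_out; rewrite negbK.
have tot_r : Defs.total (restr_vec (fun i => theq i != 0) theq) = Defs.total theq.
  rewrite /Defs.total /restr_vec (@sig_sum _ _ (fun i => theq i != 0) theq).
  by rewrite -sum_off // => j /negPn /eqP.
have Rfeas : feasible (restr_mx (fun i => theq i != 0) W) mu
                      (restr_vec (fun i => theq i != 0) theq).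
  split => [j|s]; first exact: th0.
  have -> : util (restr_mx (fun i => theq i != 0) W) s (restr_vec (fun i => theq i != 0) theq)
      = util (fun i j => W i j) (val s) theq.
    rewrite /util /restr_mx /restr_vec.
    rewrite (@sig_sum _ _ (fun i => theq i != 0) (fun j => W j (val s) * theq j)).
    by rewrite -sum_off // => j /negPn /eqP ->; rewrite mulr0.
  exact: thfeas.
have bound : forall x : {i : 'I_k | theq i != 0} -> R,
    feasible (restr_mx (fun i => theq i != 0) W) mu x ->
    0 <= \sum_i theq i * (util (fun i j => W i j) i (extend x) - mu).
  move=> x [_ xf]; apply: sumr_ge0 => i _.
  case: (eqVneq (theq i) 0) => [-> | nz]; first by rewrite mul0r.
  apply: mulr_ge0 => //; rewrite subr_ge0.
  by have := xf (exist _ i nz); rewrite -util_ext.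
have Ropt : forall x, feasible (restr_mx (fun i => theq i != 0) W) mu x ->
    Defs.total (restr_vec (fun i => theq i != 0) theq) <= Defs.total x.
  move=> x xf; rewrite tot_r -total_extend.
  have := bound x xf; rewrite gap; last exact: ext_z.
  by rewrite pmulr_rge0 // subr_ge0.
split; first by split.
move=> thbar [tbf tbopt].
set tb := extend thbar.
have tot_tb : Defs.total tb = Defs.total theq.
  rewrite /tb total_extend -tot_r; apply/eqP; rewrite eq_le (tbopt _ Rfeas) /=.
  exact: Ropt.
have tbz : forall i, theq i == 0 -> tb i = 0 by move=> i; exact: ext_z.
have tbeq : forall i, theq i != 0 -> util (fun i j => W i j) i tb = mu.
  move=> i nz.
  have S0 := gap tb tbz; rewrite tot_tb subrr mulr0 in S0.
  have nn : forall j, predT j -> 0 <= theq j * (util (fun i j => W i j) j tb - mu).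
    move=> j _; case: (eqVneq (theq j) 0) => [-> | nz']; first by rewrite mul0r.
    apply: mulr_ge0 => //; rewrite subr_ge0.
    by have := (proj2 tbf) (exist _ j nz'); rewrite -util_ext.
  have := @psumr_eq0P _ _ predT _ nn S0 i isT.
  by move/eqP; rewrite mulf_eq0 (negbTE nz) /= subr_eq0 => /eqP.
have same : forall i, util (fun i j => W i j) i tb = util (fun i j => W i j) i theq.
  have Dd : forall b, \sum_a (tb a - theq a) * W a b =
      util (fun i j => W i j) b tb - util (fun i j => W i j) b theq.
    move=> b; rewrite /util -sumrB; apply: eq_bigr => a _; ring.
  move=> i; apply/eqP; rewrite -subr_eq0 -Dd; apply/eqP.
  apply: (@psd_orth _ _ W Wsym Wpsd Wdiag (fun a => tb a - theq a)) => b; rewrite Dd.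
  case: (eqVneq (theq b) 0) => [z | nz].
    by rewrite z tbz ?z // subrr mul0r.
  by rewrite tbeq // tight // subrr mulr0.
split.
  split.
    split.
      move=> j; case: (eqVneq (theq j) 0) => [/eqP/tbz -> // | nz].
      by rewrite /tb -[j]/(val (exist (fun i => theq i != 0) j nz)) extend_in; apply: (proj1 tbf).
    by move=> i; rewrite same.
  move=> i t t0 tlt.
  case: (eqVneq (theq i) 0) => [/eqP/tbz Hz | nz]; first by move: tlt; rewrite Hz; lra.
  rewrite util_repl /= Wdiag tbeq //; lra.
by move=> th' Hst; rewrite tot_tb; apply: thopt.
Qed.
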